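(* Let $M,K$ be real anti-symmetric $m\times m$ matrices, $S:\mathbb R^m\to\mathbb R$ smooth, $A$ a real symmetric and $B$ a real anti-symmetric $m\times m$ matrix. Let $\mathbf z_h$ be a solution of the semi-discrete DG scheme described in the context. Suppose $d\mathbf z_h$ and $d\breve{\mathbf z}_h$ are continuously differentiable functions of $t$ with values in $\mathbf V_h$, each satisfying, for every $j$ and every $\boldsymbol\varphi\in\mathbf V_h$, the variational equation $$\int_{I_j}M\,\partial_t(d\mathbf z_h)\cdot\boldsymbol\varphi\,dx-\int_{I_j}K\,d\mathbf z_h\cdot\partial_x\boldsymbol\varphi\,dx+\big(\widehat{K d\mathbf z_h}\cdot\boldsymbol\varphi^-\big)_{j+\frac12}-\big(\widehat{K d\mathbf z_h}\cdot\boldsymbol\varphi^+\big)_{j-\frac12}=\int_{I_j}\nabla_{\mathbf z\mathbf z}S(\mathbf z_h)\,d\mathbf z_h\cdot\boldsymbol\varphi\,dx,$$ where $\widehat{K d\mathbf z_h}=K\{d\mathbf z_h\}+A[d\mathbf z_h]+B\,\partial_t[d\mathbf z_h]$ at each interface. Define $$\omega_{h,j}=\int_{I_j}M\,d\mathbf z_h\cdot d\breve{\mathbf z}_h\,dx+\tfrac12\big(B[d\breve{\mathbf z}_h]\cdot[d\mathbf z_h]\big)_{j+\frac12}+\tfrac12\big(B[d\breve{\mathbf z}_h]\cdot[d\mathbf z_h]\big)_{j-\frac12}$$ and, at each interface, $\mathcal F(d\mathbf z_h,d\breve{\mathbf z}_h)=\{K\,d\mathbf z_h\cdot d\breve{\mathbf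 z}_h\}-\widehat{K d\mathbf z_h}\cdot\{d\breve{\mathbf z}_h\}+\widehat{K d\breve{\mathbf z}_h}\cdot\{d\mathbf z_h\}$. Then for every $j$, $$\frac{d}{dt}\omega_{h,j}-\mathcal F(d\mathbf z_h,d\breve{\mathbf z}_h)_{j+\frac12}+\mathcal F(d\mathbf z_h,d\breve{\mathbf z}_h)_{j-\frac12}=0.$$
   Context: Mesh and spaces: a one-dimensional domain $\Omega$ is partitioned into cells $I_j=[x_{j-1/2},x_{j+1/2}]$, $j=1,\dots,N$, with periodic boundary conditions (interface indices taken modulo $N$). For fixed $k\ge 0$, $V_h=\{v\in L^2(\Omega): v|_{I_j}\text{ is a polynomial of degree}\le k\ \forall j\}$ and $\mathbf V_h=(V_h)^m$. For $\mathbf v\in\mathbf V_h$, $\mathbf v^+_{j+1/2}$ and $\mathbf v^-_{j+1/2}$ are its right and left limits at $x_{j+1/2}$; $\{\mathbf v\}=\frac12(\mathbf v^++\mathbf v^-)$, $[\mathbf v]=\mathbf v^+-\mathbf v^-$, and $\{K\mathbf v\cdot\mathbf w\}=\frac12(K\mathbf v^+\cdot\mathbf w^++K\mathbf v^-\cdot\mathbf w^-)$. Subscript $j\pm\frac12$ means evaluation at $x_{j\pm1/2}$. The semi-discrete DG scheme: find $\mathbf z_h(t)\in\mathbf V_h$, continuously differentiable in $t$, such that for all $j$ and all $\boldsymbol\varphi\in\mathbf V_h$, $$\int_{I_j}M\partial_t\mathbf z_h\cdot\boldsymbol\varphi\,dx-\int_{I_j}K\mathbf z_h\cdot\partial_x\boldsymbol\varphi\,dx+\big(\widehat{K\mathbf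 z_h}\cdot\boldsymbol\varphi^-\big)_{j+\frac12}-\big(\widehat{K\mathbf z_h}\cdot\boldsymbol\varphi^+\big)_{j-\frac12}=\int_{I_j}\nabla_{\mathbf z}S(\mathbf z_h)\cdot\boldsymbol\varphi\,dx,$$ with numerical flux $\widehat{K\mathbf z_h}=K\{\mathbf z_h\}+A[\mathbf z_h]+B\,\partial_t[\mathbf z_h]$ at each interface. This is a discretization of the multi-symplectic Hamiltonian PDE $M\mathbf z_t+K\mathbf z_x=\nabla_{\mathbf z}S(\mathbf z)$. $\nabla_{\mathbf z\mathbf z}S$ is the Hessian of $S$. *)

(* Defs.v *)
From HB Require Import structures.
From mathcomp Require Import all_boot all_order all_algebra.
From mathcomp Require Import all_classical all_reals all_analysis.
Set Implicit Arguments. Unset Strict Implicit. Unset Printing Implicit Defensive.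
Import Order.TTheory GRing.Theory Num.Theory.
Import numFieldNormedType.Exports.
Local Open Scope classical_set_scope.
Local Open Scope ring_scope.

(* Cells are indexed by j : 'I_N (0-based; the paper's cell I_{j+1}).
   [xs : nat -> R] lists the nodes x_{1/2} < x_{3/2} < ... < x_{N+1/2}:
   cell j is [xs j, xs j.+1].
   An element of V_h^m = (V_h)^m is given cellwise: v j c is the polynomial
   (of degree <= k) equal to the c-th component of v on cell j.
   Interfaces are indexed by i : 'I_N: interface i is the right end of cell
   i, i.e. x_{i+1/2} (paper numbering shifted by one); periodicity:
   its right neighbour cell is [ordS i] (= i+1 mod N), and the left
   interface of cell j is interface [ord_pred j] (= j-1 mod N).            *)

Definition dgfun (R : realType) (m N : nat) := 'I_N -> 'I_m -> {poly R}.

Section DG.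
Variables (R : realType) (m N : nat).

Definition inVh (k : nat) (v : dgfun R m N) : Prop :=
  forall (j : 'I_N) (c : 'I_m), (size (v j c) <= k.+1)%N.

Definition dot (u w : 'cV[R]_m) : R := \sum_(c < m) u c 0 * w c 0.

Definition ev (v : dgfun R m N) (j : 'I_N) (x : R) : 'cV[R]_m :=
  \col_c (v j c).[x].
Definition evdx (v : dgfun R m N) (j : 'I_N) (x : R) : 'cV[R]_m :=
  \col_c ((v j c)^`()).[x].

Variable xs : nat -> R.

Definition cellint (j : 'I_N) (f : R -> R) : R :=
  \int[lebesgue_measure]_(x in `[xs j, xs j.+1]) f x.

Definition trm (v : dgfun R m N) (i : 'I_N) : 'cV[R]_m :=
  ev v i (xs (i : nat).+1).
Definition trp (v : dgfun R m N) (i : 'I_N) : 'cV[R]_m :=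
  ev v (ordS i) (xs (ordS i : nat)).

Definition jmp (v : dgfun R m N) (i : 'I_N) : 'cV[R]_m := trp v i - trm v i.
Definition avg (v : dgfun R m N) (i : 'I_N) : 'cV[R]_m :=
  2^-1 *: (trp v i + trm v i).
Definition avgdot (K : 'M[R]_m) (v w : dgfun R m N) (i : 'I_N) : R :=
  2^-1 * (dot (K *m trp v i) (trp w i) + dot (K *m trm v i) (trm w i)).

Definition dtev (u : R -> dgfun R m N) (t : R) (j : 'I_N) (x : R)
  : 'cV[R]_m := \col_c derive1 (fun s => (u s j c).[x]) t.
Definition dtjmp (u : R -> dgfun R m N) (t : R) (i : 'I_N) : 'cV[R]_m :=
  \col_c derive1 (fun s => jmp (u s) i c 0) t.

Definition flux (K A B : 'M[R]_m) (u : R -> dgfun R m N) (t : R)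
  (i : 'I_N) : 'cV[R]_m :=
  K *m avg (u t) i + A *m jmp (u t) i + B *m dtjmp u t i.

Definition C1Vh (k : nat) (u : R -> dgfun R m N) : Prop :=
  (forall t, inVh k (u t)) /\
  (forall (j : 'I_N) (c : 'I_m) (n : nat),
     (forall t, derivable (fun s => (u s j c)`_n) t 1) /\
     continuous (fun t => derive1 (fun s => (u s j c)`_n) t)).

Definition dg_lhs (M K A B : 'M[R]_m) (u : R -> dgfun R m N) (t : R)
  (j : 'I_N) (phi : dgfun R m N) : R :=
  cellint j (fun x => dot (M *m dtev u t j x) (ev phi j x))
  - cellint j (fun x => dot (K *m ev (u t) j x) (evdx phi j x))
  + dot (flux K A B u t j) (trm phi j)
  - dot (flux K A B u t (ord_pred j)) (trp phi (ord_pred j)).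

End DG.

Section Calc.
Variables (R : realType) (m : nat).

Definition partial (c : 'I_m) (f : 'cV[R]_m -> R) (z : 'cV[R]_m) : R :=
  derive1 (fun s : R => f (z + s *: delta_mx c 0)) 0.

Fixpoint ipartial (s : seq 'I_m) (f : 'cV[R]_m -> R) : 'cV[R]_m -> R :=
  match s with
  | [::] => f
  | c :: s' => partial c (ipartial s' f)
  end.

Definition smooth (f : 'cV[R]_m -> R) : Prop :=
  forall s : seq 'I_m,
    continuous (ipartial s f) /\
    (forall (c : 'I_m) (z : 'cV[R]_m),
        derivable (fun r : R => ipartial s f (z + r *: delta_mx c 0)) 0 1).

Definition grad (f : 'cV[R]_m -> R) (z : 'cV[R]_m) : 'cV[R]_m :=
  \col_c partial c f z.

Definition hess (f : 'cV[R]_m -> R) (z : 'cV[R]_m) : 'M[R]_m :=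
  \matrix_(a, b) partial a (partial b f) z.

End Calc.

Section Scheme.
Variables (R : realType) (m N k : nat) (xs : nat -> R)
  (M K A B : 'M[R]_m) (S : 'cV[R]_m -> R).

Definition is_DG_solution (z : R -> dgfun R m N) : Prop :=
  C1Vh k z /\
  forall (t : R) (j : 'I_N) (phi : dgfun R m N), inVh k phi ->
    dg_lhs xs M K A B z t j phi
    = cellint xs j (fun x => dot (grad S (ev (z t) j x)) (ev phi j x)).

Definition is_variational_solution (z dz : R -> dgfun R m N) : Prop :=
  C1Vh k dz /\
  forall (t : R) (j : 'I_N) (phi : dgfun R m N), inVh k phi ->
    dg_lhs xs M K A B dz t j phi
    = cellint xs j (fun x =>
        dot (hess S (ev (z t) j x) *m ev (dz t) j x) (ev phi j x)).

Definition omega (dz dzb : R -> dgfun R m N) (j : 'I_N) (t : R) : R :=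
  cellint xs j (fun x => dot (M *m ev (dz t) j x) (ev (dzb t) j x))
  + 2^-1 * dot (B *m jmp xs (dzb t) j) (jmp xs (dz t) j)
  + 2^-1 * dot (B *m jmp xs (dzb t) (ord_pred j))
                 (jmp xs (dz t) (ord_pred j)).

Definition Fnum (dz dzb : R -> dgfun R m N) (t : R) (i : 'I_N) : R :=
  avgdot xs K (dz t) (dzb t) i
  - dot (flux xs K A B dz t i) (avg xs (dzb t) i)
  + dot (flux xs K A B dzb t i) (avg xs (dz t) i).

End Scheme.

(* Main.v *)
Require Import Defs.
From HB Require Import structures.
From mathcomp Require Import all_boot all_order all_algebra.
From mathcomp Require Import all_classical all_reals all_analysis.
From mathcomp Require Import ring lra.
Import Order.TTheory GRing.Theory Num.Theory.
Import numFieldNormedType.Exports.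
Local Open Scope ring_scope.
Section PartB.
Variable R : realType.
Lemma ftc_poly (a b : R) (P : {poly R}) : a < b ->
  \int[lebesgue_measure]_(x in `[a,b]) (P^`()).[x] = P.[b] - P.[a].
Proof.
move=> ab.
rewrite /Rintegral (@continuous_FTC2 R (horner P^`()) (horner P) a b ab) /=.
- by [].
- exact/continuous_subspaceT/continuous_horner.
- split.
  + move=> x _; exact: derivable_horner.
  + exact/cvg_at_right_filter/continuous_horner.
  + exact/cvg_at_left_filter/continuous_horner.
- by move=> x _; rewrite -derivE.
Qed.

Definition prim (p : {poly R}) : {poly R} :=
  \poly_(i < (size p).+1) (if i is i'.+1 then p`_i' / (i'.+1)%:R else 0).

Lemma prim_deriv p : (prim p)^`() = p.
Proof.
apply/polyP => i; rewrite coef_deriv coef_poly.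
case: ltnP => h.
  by rewrite /= -(mulr_natr (_ / _)) divfK // pnatr_eq0.
by rewrite mul0rn nth_default //; rewrite ltnS in h; exact: ltnW.
Qed.

Variables a b : R.
Hypothesis ab : a < b.
Definition CI (p : {poly R}) := \int[lebesgue_measure]_(x in `[a,b]) p.[x].

Lemma CI_prim p : CI p = (prim p).[b] - (prim p).[a].
Proof. by rewrite /CI -ftc_poly // prim_deriv. Qed.

Lemma CI_deriv p : CI p^`() = p.[b] - p.[a].
Proof. exact: ftc_poly. Qed.

Lemma CI_add p q : CI (p + q) = CI p + CI q.
Proof.
rewrite -{1}(prim_deriv p) -{1}(prim_deriv q) -derivD CI_deriv !CI_prim hornerD hornerD.
ring.
Qed.

Lemma CI_scale c p : CI (c *: p) = c * CI p.
Proof.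
rewrite -{1}(prim_deriv p) -derivZ CI_deriv !CI_prim !hornerZ; ring.
Qed.

Lemma CI_opp p : CI (- p) = - CI p.
Proof. by rewrite -scaleN1r CI_scale mulN1r. Qed.

Lemma CI_sub p q : CI (p - q) = CI p - CI q.
Proof. by rewrite CI_add CI_opp. Qed.

Lemma CI_zero : CI 0 = 0.
Proof. by rewrite -(scale0r 0) CI_scale mul0r. Qed.

Lemma CI_sum (I : Type) (r : seq I) (P : pred I) (F : I -> {poly R}) :
  CI (\sum_(i <- r | P i) F i) = \sum_(i <- r | P i) CI (F i).
Proof.
elim/big_rec2: _; first exact: CI_zero.
by move=> i y p _ <-; rewrite CI_add.
Qed.

Lemma poly_wide (p : {poly R}) n : (size p <= n)%N ->
  p = \sum_(i < n) p`_i *: 'X^i.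
Proof.
move=> hs; rewrite -poly_def; apply/polyP => i; rewrite coef_poly.
by case: ltnP => // h; rewrite nth_default //; exact: leq_trans h.
Qed.

Lemma CI_mul (p q : {poly R}) n : (size p <= n)%N -> (size q <= n)%N ->
  CI (p * q) = \sum_(i < n) \sum_(l < n) p`_i * q`_l * CI 'X^(i + l).
Proof.
move=> hp hq; rewrite {1}(poly_wide _ _ hp) {1}(poly_wide _ _ hq) mulr_suml CI_sum.
apply: eq_bigr => i _; rewrite mulr_sumr CI_sum; apply: eq_bigr => l _.
by rewrite -scalerAl -scalerAr -exprD !CI_scale mulrA.
Qed.
End PartB.
Section IsD.
Variable R : realType.
Implicit Types (f g : R -> R) (t : R).

Lemma isd_ext f g t df : (forall s, f s = g s) -> is_derive t 1 f df -> is_derive t 1 g df.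
Proof. by move=> e; rewrite (_ : f = g) //; apply/funext. Qed.

Lemma isd_eq f t df df' : df = df' -> is_derive t 1 f df -> is_derive t 1 f df'.
Proof. by move=> ->. Qed.

Lemma isd_cst (c t : R) : is_derive t 1 (fun _ : R => c) 0.
Proof. exact: is_derive_cst. Qed.

Lemma isd_add f g t df dg : is_derive t 1 f df -> is_derive t 1 g dg ->
  is_derive t 1 (fun s => f s + g s) (df + dg).
Proof. move=> hf hg; exact: is_deriveD. Qed.

Lemma isd_sub f g t df dg : is_derive t 1 f df -> is_derive t 1 g dg ->
  is_derive t 1 (fun s => f s - g s) (df - dg).
Proof. move=> hf hg; exact: is_deriveB. Qed.

Lemma isd_mul f g t df dg : is_derive t 1 f df -> is_derive t 1 g dg ->
  is_derive t 1 (fun s => f s * g s) (df * g t + f t * dg).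
Proof.
move=> hf hg; have := is_deriveM hf hg.
by apply: isd_eq; rewrite /GRing.scale /= addrC mulrC.
Qed.

Lemma isd_scale f (c t : R) df : is_derive t 1 f df ->
  is_derive t 1 (fun s => c * f s) (c * df).
Proof. move=> hf; exact: is_deriveZ. Qed.

Lemma isd_mulc f (c t : R) df : is_derive t 1 f df ->
  is_derive t 1 (fun s => f s * c) (df * c).
Proof.
move=> hf; rewrite (_ : (fun s => f s * c) = (fun s => c * f s)); last first.
  by apply/funext => s; rewrite mulrC.
by rewrite mulrC; apply: isd_scale.
Qed.

Lemma isd_sum n (F : 'I_n -> R -> R) t (dF : 'I_n -> R) :
  (forall i, is_derive t 1 (F i) (dF i)) ->
  is_derive t 1 (fun s => \sum_(i < n) F i s) (\sum_(i < n) dF i).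
Proof.
move=> h; have := is_derive_sum h; apply: isd_ext => s.
by rewrite fct_sumE.
Qed.

Lemma isd_derive1 f t df : is_derive t 1 f df -> derive1 f t = df.
Proof. by move=> h; rewrite derive1E derive_val. Qed.
End IsD.
Section Schwarz.
Variables (R : realType) (m : nat).
Local Notation e c := (delta_mx c 0 : 'cV[R]_m).

Lemma shift_isd (f : 'cV[R]_m -> R) (c : 'I_m) (y : 'cV[R]_m) (r0 : R) :
  (forall z, derivable (fun r : R => f (z + r *: e c)) 0 1) ->
  is_derive r0 1 (fun r : R => f (y + r *: e c)) (partial c f (y + r0 *: e c)).
Proof.
move=> hd.
set F := fun r : R => f (y + r *: e c).
set G := fun r : R => f ((y + r0 *: e c) + r *: e c).
have eq : (fun h : R => h^-1 *: ((F \o shift r0) (h *: 1) - F r0))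
        = (fun h => h^-1 *: ((G \o shift 0) (h *: 1) - G 0)).
  apply/funext => h; rewrite /F /G /= !addr0 scale0r addr0 scalerDl addrA.
  by rewrite (addrAC y).
have dG : derivable G 0 1 := hd _.
apply: DeriveDef.
- by rewrite /derivable eq.
- by rewrite /partial derive1E /derive eq.
Qed.

Lemma mixed (f : 'cV[R]_m -> R) a b z h : 0 < h ->
  (forall z, derivable (fun r : R => f (z + r *: e a)) 0 1) ->
  (forall z, derivable (fun r : R => partial a f (z + r *: e b)) 0 1) ->
  exists xi eta, [/\ 0 < xi < h, 0 < eta < h &
    f (z + h *: e a + h *: e b) - f (z + h *: e a) - f (z + h *: e b) + f z
    = h * (h * partial b (partial a f) (z + xi *: e a + eta *: e b))].
Proof.
move=> h0 da db.
pose g := fun s : R => f (z + h *: e b + s *: e a) - f (z + s *: e a).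
pose dg := fun s : R => partial a f (z + h *: e b + s *: e a) - partial a f (z + s *: e a).
have gd : forall s : R, is_derive s 1 g (dg s).
  move=> s; apply: isd_sub; exact: shift_isd.
have [xi xiin gxi] := MVT h0 (fun x _ => gd x)
  (derivable_within_continuous (fun x _ => @ex_derive _ _ _ _ _ _ _ (gd x))).
pose phi := fun r : R => partial a f (z + xi *: e a + r *: e b).
have pd : forall r : R, is_derive r 1 phi (partial b (partial a f) (z + xi *: e a + r *: e b)).
  move=> r; exact: shift_isd.
have [eta etain pe] := MVT h0 (fun x _ => pd x)
  (derivable_within_continuous (fun x _ => @ex_derive _ _ _ _ _ _ _ (pd x))).
exists xi, eta; split.
- by move: xiin; rewrite in_itv.
- by move: etain; rewrite in_itv.
move: gxi pe; rewrite /g /dg /phi !scale0r !addr0 subr0 => gxi pe.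
have -> : z + h *: e a + h *: e b = z + h *: e b + h *: e a by rewrite addrAC.
rewrite (addrAC z (xi *: e a)) in pe.
have -> : f (z + h *: e b + h *: e a) - f (z + h *: e a) - f (z + h *: e b) + f z
  = f (z + h *: e b + h *: e a) - f (z + h *: e a) - (f (z + h *: e b) - f z) by ring.
by rewrite gxi pe; ring.
Qed.
End Schwarz.
Section S2.
Variables (R : realType) (m : nat).
Local Notation e c := (delta_mx c 0 : 'cV[R]_m).
Lemma ball_small (z : 'cV[R]_m) (c c' : 'I_m) xi eta d : 0 < d -> 0 <= xi -> 0 <= eta ->
  xi + eta < d -> ball z d (z + xi *: e c + eta *: e c').
Proof.
move=> d0 x0 e0 lt.
rewrite /ball /=; split => // i j; rewrite /ball /= !mxE.
set b1 := (_ && _)%:R; set b2 := (_ && _)%:R.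
have -> : z i j - (z i j + xi * b1 + eta * b2) = - (xi * b1 + eta * b2) by ring.
rewrite normrN /b1 /b2.
case: (_ && _); case: (_ && _); rewrite ?mulr1 ?mulr0 ?addr0 ?add0r ?normr0 //;
  rewrite ger0_norm //; try lra; exact: addr_ge0.
Qed.

Lemma cont_eq (G1 G2 : 'cV[R]_m -> R) z : continuous G1 -> continuous G2 ->
  (forall d, 0 < d -> exists P Q, [/\ ball z d P, ball z d Q & G1 P = G2 Q]) ->
  G1 z = G2 z.
Proof.
move=> c1 c2 H.
have [//|hne] := eqVneq (G1 z) (G2 z); exfalso.
pose eps := `|G1 z - G2 z| / 2.
have ep : 0 < eps by rewrite divr_gt0 // normr_gt0 subr_eq0.
have n1 : \forall t \near z, `|G1 z - G1 t| < eps.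
  exact: (@cvgr_dist_lt _ _ _ _ _ G1 (G1 z) (c1 z) _ ep).
have n2 : \forall t \near z, `|G2 z - G2 t| < eps.
  exact: (@cvgr_dist_lt _ _ _ _ _ G2 (G2 z) (c2 z) _ ep).
have [d d0' hd] := iffLR (nbhs_ballP _ _) (filterI n1 n2).
have [P [Q [B1 B2 E]]] := H d d0'.
have [h1 _] := hd _ B1.
have [_ h2] := hd _ B2.
have le := ler_distD (G1 P) (G1 z) (G2 z).
rewrite E (distrC (G2 Q)) in le.
have h1' : `|G1 z - G2 Q| < eps by rewrite -E.
move: le h1' h2; rewrite /eps; lra.
Qed.

Lemma schwarz (f : 'cV[R]_m -> R) a b z :
  (forall c z, derivable (fun r : R => f (z + r *: e c)) 0 1) ->
  (forall c z, derivable (fun r : R => partial a f (z + r *: e c)) 0 1) ->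
  (forall c z, derivable (fun r : R => partial b f (z + r *: e c)) 0 1) ->
  continuous (partial b (partial a f)) -> continuous (partial a (partial b f)) ->
  partial b (partial a f) z = partial a (partial b f) z.
Proof.
move=> d0 da db c1 c2.
apply: cont_eq => // d dpos.
have h0 : 0 < d / 4 by rewrite divr_gt0.
have [xi [eta [/andP[x0 x1] /andP[y0 y1] eq1]]] := @mixed R m f a b z _ h0 (d0 a) (da b).
have [xi' [eta' [/andP[x0' x1'] /andP[y0' y1'] eq2]]] := @mixed R m f b a z _ h0 (d0 b) (db a).
exists (z + xi *: e a + eta *: e b), (z + xi' *: e b + eta' *: e a); split.
- apply: ball_small => //; [exact: ltW | exact: ltW | ].
  by clear -x1 y1 dpos; lra.
- apply: ball_small => //; [exact: ltW | exact: ltW | ].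
  by clear -x1' y1' dpos; lra.
move: eq1 eq2; rewrite (addrAC z (_ *: e b)).
move: (f _) (f _) (f _) (f z) => A1 A2 A3 A4.
move: (partial b _ _) (partial a _ _) => X Y.
have hnz : d / 4 != 0 by rewrite gt_eqF.
move: (d / 4) hnz => h hnz e1 e2.
apply: (mulfI hnz); apply: (mulfI hnz); rewrite -e1 -e2; ring.
Qed.
End S2.
Section Dot.
Variables (R : realType) (m : nat).
Implicit Types (u v w : 'cV[R]_m) (X : 'M[R]_m).
Local Notation dot := (@dot R m).

Lemma dotDl u v w : dot (u + v) w = dot u w + dot v w.
Proof. by rewrite /dot -big_split; apply: eq_bigr => c _; rewrite mxE mulrDl. Qed.
Lemma dotDr u v w : dot w (u + v) = dot w u + dot w v.
Proof. by rewrite /dot -big_split; apply: eq_bigr => c _; rewrite mxE mulrDr. Qed.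
Lemma dotZl a u w : dot (a *: u) w = a * dot u w.
Proof. by rewrite /dot mulr_sumr; apply: eq_bigr => c _; rewrite mxE mulrA. Qed.
Lemma dotZr a u w : dot w (a *: u) = a * dot w u.
Proof. by rewrite /dot mulr_sumr; apply: eq_bigr => c _; rewrite mxE mulrCA. Qed.
Lemma dotNl u w : dot (- u) w = - dot u w.
Proof. by rewrite -scaleN1r dotZl mulN1r. Qed.
Lemma dotNr u w : dot w (- u) = - dot w u.
Proof. by rewrite -scaleN1r dotZr mulN1r. Qed.
Lemma dotBl u v w : dot (u - v) w = dot u w - dot v w.
Proof. by rewrite dotDl dotNl. Qed.
Lemma dotBr u v w : dot w (u - v) = dot w u - dot w v.
Proof. by rewrite dotDr dotNr. Qed.
Lemma dotC u w : dot u w = dot w u.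
Proof. by apply: eq_bigr => c _; rewrite mulrC. Qed.
Lemma dot_tr X v w : dot (X *m v) w = dot (X^T *m w) v.
Proof.
rewrite /dot.
under eq_bigr do rewrite mxE mulr_suml.
under [RHS]eq_bigr do rewrite mxE mulr_suml.
rewrite exchange_big /=; apply: eq_bigr => c _; apply: eq_bigr => d _.
by rewrite mxE; ring.
Qed.
End Dot.
Section Iface.
Variables (R : realType) (m : nat).
Variables (K A B : 'M[R]_m).
Hypotheses (hK : K^T = - K) (hA : A^T = A) (hB : B^T = - B).
Variables (up um wp wm du dw : 'cV[R]_m).
Local Notation dot := (@dot R m).
Let avu := 2^-1 *: (up + um).
Let avw := 2^-1 *: (wp + wm).
Let Fu := K *m avu + A *m (up - um) + B *m du.
Let Fw := K *m avw + A *m (wp - wm) + B *m dw.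
Let Fn := 2^-1 * (dot (K *m up) wp + dot (K *m um) wm) - dot Fu avw + dot Fw avu.
Let Bt := 2^-1 * (dot (B *m dw) (up - um) + dot (B *m (wp - wm)) du).

Ltac expand := rewrite ?mulmxDr ?mulmxN -?scalemxAr ?dotDl ?dotDr ?dotZl ?dotZr ?dotNl ?dotNr ?mulmxDr ?mulmxN -?scalemxAr ?dotDl ?dotDr ?dotZl ?dotZr ?dotNl ?dotNr.
Ltac swapw := rewrite ?(@dot_tr _ _ K wp) ?(@dot_tr _ _ K wm) ?(@dot_tr _ _ K dw) ?(@dot_tr _ _ A wp) ?(@dot_tr _ _ A wm) ?(@dot_tr _ _ A dw) ?(@dot_tr _ _ B wp) ?(@dot_tr _ _ B wm) ?(@dot_tr _ _ B dw) ?hK ?hA ?hB ?mulNmx ?dotNl.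

Lemma iface_right :
  dot (K *m um) wm - dot Fu wm + dot Fw um + Bt - Fn = 0.
Proof.
rewrite /Fn /Bt /Fu /Fw /avu /avw; expand; swapw.
lra.
Qed.

Lemma iface_left :
  - dot (K *m up) wp + dot Fu wp - dot Fw up + Bt + Fn = 0.
Proof.
rewrite /Fn /Bt /Fu /Fw /avu /avw; expand; swapw.
lra.
Qed.
End Iface.
Arguments isd_ext {R f g t df}.
Arguments isd_eq {R f t df df'}.
Arguments isd_add {R f g t df dg}.
Arguments isd_sub {R f g t df dg}.
Arguments isd_mul {R f g t df dg}.
Arguments isd_scale {R f} c {t df}.
Arguments isd_mulc {R f} c {t df}.
Arguments isd_sum {R n F t dF}.
Arguments isd_derive1 {R f t df}.

Section HessSym.
Variables (R : realType) (m : nat).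
Lemma hess_sym (S : 'cV[R]_m -> R) z : smooth S -> (hess S z)^T = hess S z.
Proof.
move=> hS.
have i0 : ipartial [::] S = S by [].
have i1 : forall a, ipartial [:: a] S = partial a S by [].
have i2 : forall a b, ipartial [:: a; b] S = partial a (partial b S) by [].
apply/matrixP => a b; rewrite !mxE.
have d0 := fun c y => (hS [::]).2 c y; rewrite i0 in d0.
have da := fun c y => (hS [:: a]).2 c y; rewrite i1 in da.
have db := fun c y => (hS [:: b]).2 c y; rewrite i1 in db.
have c1 := (hS [:: b; a]).1; rewrite i2 in c1.
have c2 := (hS [:: a; b]).1; rewrite i2 in c2.
exact: (@schwarz R m S a b z d0 da db c1 c2).
Qed.

End HessSym.

Section DGC.
Variables (R : realType) (m N k : nat) (xs : nat -> R).
Implicit Types (u w : R -> dgfun R m N) (t x : R).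

Definition DD u t : dgfun R m N :=
  fun j c => \poly_(n < k.+1) derive1 (fun s => (u s j c)`_n) t.

Lemma size_DD u t j c : (size (DD u t j c) <= k.+1)%N.
Proof. exact: size_poly. Qed.

Lemma coef_isd u t j c n : C1Vh k u ->
  is_derive t 1 (fun s => (u s j c)`_n) ((DD u t j c)`_n).
Proof.
move=> [hs hd]; rewrite /DD coef_poly.
case: ltnP => hn.
  rewrite derive1E; apply: derivableP; exact: (hd j c n).1.
have -> : (fun s => (u s j c)`_n) = (fun _ => 0).
  apply/funext => s; rewrite nth_default //; exact: leq_trans (hs s j c) hn.
exact: isd_cst.
Qed.

Lemma horner_isd u t j c x : C1Vh k u ->
  is_derive t 1 (fun s => (u s j c).[x]) ((DD u t j c).[x]).
Proof.
move=> hu.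
rewrite (horner_coef_wide x (size_DD u t j c)).
apply: (@isd_ext _ (fun s => \sum_(i < k.+1) (u s j c)`_i * x ^+ i)).
  by move=> s; rewrite (horner_coef_wide x (hu.1 s j c)).
apply: isd_sum => i; apply: isd_mulc; exact: coef_isd.
Qed.

Lemma dtev_DD u t j x : C1Vh k u -> dtev u t j x = ev (DD u t) j x.
Proof.
move=> hu; apply/matrixP => c d; rewrite !mxE.
apply: isd_derive1; exact: horner_isd.
Qed.

Lemma jmp_isd u t i c : C1Vh k u ->
  is_derive t 1 (fun s => jmp xs (u s) i c 0) (dtjmp xs u t i c 0).
Proof.
move=> hu.
have h : is_derive t 1 (fun s => jmp xs (u s) i c 0) (jmp xs (DD u t) i c 0).
  rewrite /jmp /trp /trm /ev !mxE.
  apply: (@isd_ext _ (fun s => (u s (ordS i) c).[xs (ordS i)] - (u s i c).[xs i.+1])).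
    by move=> s; rewrite !mxE.
  by apply: isd_sub; apply: horner_isd.
by rewrite /dtjmp mxE (isd_derive1 h).
Qed.
End DGC.

Section PdotS.
Variables (R : realType) (m : nat).
Definition Pdot (X : 'M[R]_m) (p q : 'I_m -> {poly R}) : {poly R} :=
  \sum_(c < m) \sum_(d < m) X c d *: (p d * q c).

Lemma dot_col X (p q : 'I_m -> {poly R}) x :
  dot (X *m \col_c (p c).[x]) (\col_c (q c).[x]) = (Pdot X p q).[x].
Proof.
rewrite /dot /Pdot horner_sum; apply: eq_bigr => c _.
rewrite horner_sum !mxE mulr_suml; apply: eq_bigr => d _.
by rewrite !mxE hornerZ hornerM mulrA.
Qed.

Lemma Pdot_tr X p q : Pdot X p q = Pdot X^T q p.
Proof.
rewrite /Pdot exchange_big /=; apply: eq_bigr => c _; apply: eq_bigr => d _.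
by rewrite mxE mulrC.
Qed.

Lemma Pdot_N X p q : Pdot (- X) p q = - Pdot X p q.
Proof.
rewrite /Pdot -sumrN; apply: eq_bigr => c _; rewrite -sumrN; apply: eq_bigr => d _.
by rewrite mxE scaleNr.
Qed.

Lemma Pdot_deriv X p q :
  (Pdot X p q)^`() = Pdot X p (fun c => (q c)^`()) + Pdot X (fun c => (p c)^`()) q.
Proof.
rewrite /Pdot raddf_sum -big_split; apply: eq_bigr => c _.
rewrite raddf_sum -big_split; apply: eq_bigr => d _.
rewrite /= derivZ derivM scalerDr addrC; by [].
Qed.

Lemma CI_Pdot (a b : R) (ab : a < b) X p q :
  CI R a b (Pdot X p q) = \sum_(c < m) \sum_(d < m) X c d * CI R a b (p d * q c).
Proof.
rewrite /Pdot CI_sum //; apply: eq_bigr => c _; rewrite CI_sum //; apply: eq_bigr => d _.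
by rewrite CI_scale.
Qed.

Lemma CI_mul_isd (a b : R) (ab : a < b) n (p q : R -> {poly R}) (dp dq : {poly R}) (t : R) :
  (forall s, size (p s) <= n)%N -> (forall s, size (q s) <= n)%N ->
  (size dp <= n)%N -> (size dq <= n)%N ->
  (forall i, is_derive t 1 (fun s => (p s)`_i) dp`_i) ->
  (forall i, is_derive t 1 (fun s => (q s)`_i) dq`_i) ->
  is_derive t 1 (fun s => CI R a b (p s * q s)) (CI R a b (dp * q t) + CI R a b (p t * dq)).
Proof.
move=> sp sq sdp sdq hp hq.
apply: (@isd_ext _ (fun s => \sum_(i < n) \sum_(l < n) (p s)`_i * (q s)`_l * CI R a b 'X^(i + l))).
  by move=> s; rewrite (@CI_mul R a b ab _ _ n (sp s) (sq s)).
rewrite (@CI_mul R a b ab _ _ n sdp (sq t)) (@CI_mul R a b ab _ _ n (sp t) sdq) -big_split.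
apply: isd_sum => i /=; rewrite -big_split; apply: isd_sum => l /=.
apply: isd_eq; rewrite /GRing.scale /=; ring.
Qed.

Lemma dotvec_isd X (f g : R -> 'cV[R]_m) (df dg : 'cV[R]_m) (t : R) :
  (forall c, is_derive t 1 (fun s => f s c 0) (df c 0)) ->
  (forall c, is_derive t 1 (fun s => g s c 0) (dg c 0)) ->
  is_derive t 1 (fun s => dot (X *m f s) (g s)) (dot (X *m df) (g t) + dot (X *m f t) dg).
Proof.
move=> hf hg.
apply: (@isd_ext _ (fun s => \sum_(c < m) (\sum_(d < m) X c d * f s d 0) * g s c 0)).
  by move=> s; rewrite /dot; apply: eq_bigr => c _; rewrite mxE.
rewrite /dot -big_split; apply: isd_sum => c /=.
have h1 : is_derive t 1 (fun s => \sum_(d < m) X c d * f s d 0) (\sum_(d<m) X c d * df d 0).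
  by apply: isd_sum => d; apply: isd_scale; exact: hf.
apply: (isd_eq _ (isd_mul h1 (hg c))).
by rewrite !mxE.
Qed.
End PdotS.

Lemma CI_Pdot_isd (R : realType) (m N k : nat) (a b : R) (ab : a < b) (X : 'M[R]_m)
  (u w : R -> dgfun R m N) (j : 'I_N) (t : R) :
  C1Vh k u -> C1Vh k w ->
  is_derive t 1 (fun s => CI R a b (Pdot R m X (u s j) (w s j)))
    (CI R a b (Pdot R m X (DD R m N k u t j) (w t j)) + CI R a b (Pdot R m X (u t j) (DD R m N k w t j))).
Proof.
move=> hu hw.
apply: (@isd_ext _ (fun s => \sum_(c < m) \sum_(d < m) X c d * CI R a b (u s j d * w s j c))).
  by move=> s; rewrite CI_Pdot.
rewrite !CI_Pdot // -big_split; apply: isd_sum => c /=.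
rewrite -big_split; apply: isd_sum => d /=.
rewrite -mulrDr; apply: isd_scale.
apply: (@CI_mul_isd R a b ab k.+1 (fun s => u s j d) (fun s => w s j c)).
- by move=> s; exact: hu.1.
- by move=> s; exact: hw.1.
- exact: size_DD.
- exact: size_DD.
- by move=> i; exact: coef_isd.
- by move=> i; exact: coef_isd.
Qed.

Theorem theorem3p1 (R : realType) (m N k : nat) (xs : nat -> R)
  (M K A B : 'M[R]_m) (S : 'cV[R]_m -> R)
  (z dz dzb : R -> dgfun R m N) :
  (forall j : 'I_N, xs j < xs (j : nat).+1) ->
  M^T = - M -> K^T = - K -> A^T = A -> B^T = - B ->
  smooth S ->
  is_DG_solution k xs M K A B S z ->
  is_variational_solution k xs M K A B S z dz ->
  is_variational_solution k xs M K A B S z dzb ->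
  forall (t : R) (j : 'I_N),
    derivable (omega xs M B dz dzb j) t 1 /\
    derive1 (omega xs M B dz dzb j) t
      - Fnum xs K A B dz dzb t j + Fnum xs K A B dz dzb t (ord_pred j) = 0.
Proof.
move=> hx hM hK hA hB hS _ [hu Eu] [hw Ew] t j.
have ab := hx j.
set a := xs j; set b := xs j.+1.
have cellP : forall (X : 'M[R]_m) (v v' : dgfun R m N),
  cellint xs j (fun x => dot (X *m ev v j x) (ev v' j x)) = CI R a b (Pdot R m X (v j) (v' j)).
  move=> X v v'; rewrite /cellint /CI; congr (Rintegral _ _ _); apply/funext => x.
  exact: dot_col.
pose DW := CI R a b (Pdot R m M (DD R m N k dz t j) (dzb t j))
   + CI R a b (Pdot R m M (dz t j) (DD R m N k dzb t j))
   + 2^-1 * (dot (B *m dtjmp xs dzb t j) (jmp xs (dz t) j) + dot (B *m jmp xs (dzb t) j) (dtjmp xs dz t j))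
   + 2^-1 * (dot (B *m dtjmp xs dzb t (ord_pred j)) (jmp xs (dz t) (ord_pred j))
            + dot (B *m jmp xs (dzb t) (ord_pred j)) (dtjmp xs dz t (ord_pred j))).
have hom : is_derive t 1 (omega xs M B dz dzb j) DW.
  apply: (@isd_ext _ (fun s => CI R a b (Pdot R m M (dz s j) (dzb s j))
     + 2^-1 * dot (B *m jmp xs (dzb s) j) (jmp xs (dz s) j)
     + 2^-1 * dot (B *m jmp xs (dzb s) (ord_pred j)) (jmp xs (dz s) (ord_pred j)))).
    by move=> s; rewrite /omega cellP.
  apply: isd_add; first apply: isd_add.
  - exact: CI_Pdot_isd.
  - apply: isd_scale; apply: dotvec_isd => c.
    + exact: (@jmp_isd R m N k xs dzb t j c hw).
    + exact: (@jmp_isd R m N k xs dz t j c hu).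
  - apply: isd_scale; apply: dotvec_isd => c.
    + exact: (@jmp_isd R m N k xs dzb t _ c hw).
    + exact: (@jmp_isd R m N k xs dz t _ c hu).
split; first exact: (@ex_derive _ _ _ _ _ _ _ hom).
rewrite (isd_derive1 hom) /DW.
have e1 := Eu t j (dzb t) (hw.1 t).
have e2 := Ew t j (dz t) (hu.1 t).
have eH : cellint xs j (fun x => dot (hess S (ev (z t) j x) *m ev (dz t) j x) (ev (dzb t) j x))
        = cellint xs j (fun x => dot (hess S (ev (z t) j x) *m ev (dzb t) j x) (ev (dz t) j x)).
  rewrite /cellint; congr (Rintegral _ _ _); apply/funext => x.
  by rewrite dot_tr (@hess_sym R m S _ hS).
have e := etrans e1 (etrans eH (esym e2)).
clear e1 e2 eH.
have cdt : forall (v : R -> dgfun R m N) (v' : dgfun R m N), C1Vh k v ->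
  cellint xs j (fun x => dot (M *m dtev v t j x) (ev v' j x))
  = CI R a b (Pdot R m M (DD R m N k v t j) (v' j)).
  move=> v v' hv; rewrite /cellint /CI; congr (Rintegral _ _ _); apply/funext => x.
  rewrite (@dtev_DD R m N k v t j x hv); exact: dot_col.
have cdx : forall (v v' : dgfun R m N),
  cellint xs j (fun x => dot (K *m ev v j x) (evdx v' j x))
  = CI R a b (Pdot R m K (v j) (fun c => (v' j c)^`())).
  move=> v v'; rewrite /cellint /CI; congr (Rintegral _ _ _); apply/funext => x.
  exact: dot_col.
rewrite /dg_lhs !cdt // !cdx in e.
have f1 : CI R a b (Pdot R m M (dz t j) (DD R m N k dzb t j))
        = - CI R a b (Pdot R m M (DD R m N k dzb t j) (dz t j)).
  by rewrite Pdot_tr hM Pdot_N CI_opp.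
have f2 : CI R a b (Pdot R m K (dz t j) (fun c => (dzb t j c)^`()))
          - CI R a b (Pdot R m K (dzb t j) (fun c => (dz t j c)^`()))
        = dot (K *m trm xs (dz t) j) (trm xs (dzb t) j)
          - dot (K *m trp xs (dz t) (ord_pred j)) (trp xs (dzb t) (ord_pred j)).
  rewrite (Pdot_tr _ _ K (dzb t j)) hK Pdot_N CI_opp // opprK -CI_add //.
  rewrite -Pdot_deriv CI_deriv // -!dot_col.
  by rewrite /trm /trp ord_predK.
rewrite f1.
have r1 := @iface_right R m K A B hK hA hB (trp xs (dz t) j) (trm xs (dz t) j)
  (trp xs (dzb t) j) (trm xs (dzb t) j) (dtjmp xs dz t j) (dtjmp xs dzb t j).
have l1 := @iface_left R m K A B hK hA hB (trp xs (dz t) (ord_pred j)) (trm xs (dz t) (ord_pred j))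
  (trp xs (dzb t) (ord_pred j)) (trm xs (dzb t) (ord_pred j))
  (dtjmp xs dz t (ord_pred j)) (dtjmp xs dzb t (ord_pred j)).
move: e f2 r1 l1; rewrite /Fnum /avgdot /flux /avg /jmp.
lra.
Qed.
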